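(* Let $(\mathcal P,\cdot,[-,\dots,-])$ be a finite-dimensional solvable Poisson $n$-Lie algebra over an algebraically closed field of characteristic zero. Then $\operatorname{Nil}(\mathcal P)$ coincides with the nilradical of the $n$-Lie algebra $\mathcal P_L=(\mathcal P,[-,\dots,-])$.
   Context: A Poisson $n$-Lie algebra is a commutative associative algebra $(\mathcal P,\cdot)$ with an $n$-linear skew-symmetric bracket satisfying the fundamental identity $[x_1,\dots,x_{n-1},[y_1,\dots,y_n]]=\sum_{i=1}^n[y_1,\dots,[x_1,\dots,x_{n-1},y_i],\dots,y_n]$ and the Leibniz rule $[y\cdot z,x_2,\dots,x_n]=y\cdot[z,x_2,\dots,x_n]+z\cdot[y,x_2,\dots,x_n]$. Products/brackets of subspaces are linear spans. An ideal $\mathcal I$ of $\mathcal P$ satisfies $\mathcal P\cdot\mathcal I\subseteq\mathcal I$, $[\mathcal I,\mathcal P,\dots,\mathcal P]\subseteq\mathcal I$; it is nilpotent if $\mathcal I^s=0$ for some $s$, where $\mathcal I^1=\mathcal I$, $\mathcal I^{k+1}=[\mathcal I^k,\mathcal I,\mathcal P,\dots,\mathcal P]+\mathcal I^k\cdot\mathcal I$. $\operatorname{Nil}(\mathcal P)$ is the maximal nilpotent ideal of $\mathcal P$. The nilradical of $\mathcal P_L$ is its maximal nilpotent ideal, where an ideal $N$ of $\mathcal P_L$ is nilpotent if $N^s=0$ with $N^1=N$, $N^{k+1}=[N^k,N,\mathcal P,\dots,\mathcal P]$. $\mathcal P$ is solvable if $\mathcal P^{(s)}=0$ for some $s$, with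 $\mathcal P^{(1)}=\mathcal P$, $\mathcal P^{(k+1)}=[\mathcal P^{(k)},\mathcal P^{(k)},\mathcal P,\dots,\mathcal P]+\mathcal P^{(k)}\cdot\mathcal P^{(k)}$. *)

(* Defs.v *)
From HB Require Import structures.
From mathcomp Require Import all_boot all_order all_algebra.
Set Implicit Arguments. Unset Strict Implicit. Unset Printing Implicit Defensive.
Import GRing.Theory.
Local Open Scope ring_scope.

(* Subsets of V are predicates V -> Prop; "products/brackets of subspaces are
   linear spans": spanP S is the set of vectors lying in the span of some finite
   family of elements of S. *)
Section PoissonNLie.
Variables (F : fieldType) (V : vectType F) (n : nat).
Variables (mul : V -> V -> V) (br : {ffun 'I_n -> V} -> V).

Definition spanP (S : V -> Prop) : V -> Prop :=
  fun v => exists s : seq V, (forall x, x \in s -> S x) /\ v \in <<s>>%VS.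

Definition fullP : V -> Prop := fun _ => True.

Definition sumP (A B : V -> Prop) : V -> Prop :=
  fun v => exists a b, A a /\ B b /\ v = a + b.

Definition mulP (A B : V -> Prop) : V -> Prop :=
  spanP (fun v => exists a b, A a /\ B b /\ v = mul a b).

Definition brP (A : 'I_n -> (V -> Prop)) : V -> Prop :=
  spanP (fun v => exists x : {ffun 'I_n -> V}, (forall i, A i (x i)) /\ v = br x).

Definition args1 (X : V -> Prop) : 'I_n -> (V -> Prop) :=
  fun i => if val i == 0%N then X else fullP.
Definition args2 (X Y : V -> Prop) : 'I_n -> (V -> Prop) :=
  fun i => if val i == 0%N then X else if val i == 1%N then Y else fullP.

Definition fupd (x : {ffun 'I_n -> V}) (i : 'I_n) (u : V) : {ffun 'I_n -> V} :=
  [ffun j => if j == i then u else x j].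
Definition fswap (x : {ffun 'I_n -> V}) (i j : 'I_n) : {ffun 'I_n -> V} :=
  [ffun k => if k == i then x j else if k == j then x i else x k].
Definition flast (x : {ffun 'I_n -> V}) (z : V) : {ffun 'I_n -> V} :=
  [ffun k : 'I_n => if (val k < n.-1)%N then x k else z].

Definition comm_assoc_algebra : Prop :=
  [/\ forall (a : F) (u v w : V), mul (a *: u + v) w = a *: mul u w + mul v w,
      forall u v, mul u v = mul v u
    & forall u v w, mul u (mul v w) = mul (mul u v) w].

Definition multilinear : Prop :=
  forall (x : {ffun 'I_n -> V}) (i : 'I_n) (a : F) (u v : V),
    br (fupd x i (a *: u + v)) = a *: br (fupd x i u) + br (fupd x i v).

Definition skew_symmetric : Prop :=
  forall (x : {ffun 'I_n -> V}) (i j : 'I_n), i != j -> br (fswap x i j) = - br x.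

Definition fundamental_identity : Prop :=
  forall x y : {ffun 'I_n -> V},
    br (flast x (br y)) = \sum_(i < n) br (fupd y i (br (flast x (y i)))).

Definition leibniz_rule : Prop :=
  forall (x : {ffun 'I_n -> V}) (i : 'I_n) (y z : V), val i = 0%N ->
    br (fupd x i (mul y z)) = mul y (br (fupd x i z)) + mul z (br (fupd x i y)).

Definition poisson_nLie : Prop :=
  (2 <= n)%N /\ comm_assoc_algebra /\ multilinear /\ skew_symmetric /\
  fundamental_identity /\ leibniz_rule.

Definition poisson_ideal (I : {vspace V}) : Prop :=
  (forall v, mulP fullP (fun u => u \in I) v -> v \in I) /\
  (forall v, brP (args1 (fun u => u \in I)) v -> v \in I).

Fixpoint ppow (I : V -> Prop) (k : nat) : V -> Prop :=
  match k with
  | 0%N | 1%N => I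
  | k'.+1 => sumP (brP (args2 (ppow I k') I)) (mulP (ppow I k') I)
  end.

Definition poisson_nilpotent_ideal (I : {vspace V}) : Prop :=
  poisson_ideal I /\
  exists s, forall v, ppow (fun u => u \in I) s v -> v = 0.

Definition is_Nil (N : {vspace V}) : Prop :=
  poisson_nilpotent_ideal N /\
  forall I, poisson_nilpotent_ideal I -> (I <= N)%VS.

Definition lie_ideal (I : {vspace V}) : Prop :=
  forall v, brP (args1 (fun u => u \in I)) v -> v \in I.

Fixpoint lpow (I : V -> Prop) (k : nat) : V -> Prop :=
  match k with
  | 0%N | 1%N => I
  | k'.+1 => brP (args2 (lpow I k') I)
  end.

Definition lie_nilpotent_ideal (I : {vspace V}) : Prop :=
  lie_ideal I /\ exists s, forall v, lpow (fun u => u \in I) s v -> v = 0.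

Definition is_nilradical_L (N : {vspace V}) : Prop :=
  lie_nilpotent_ideal N /\
  forall I, lie_nilpotent_ideal I -> (I <= N)%VS.

Fixpoint dser (k : nat) : V -> Prop :=
  match k with
  | 0%N | 1%N => fullP
  | k'.+1 => sumP (brP (args2 (dser k') (dser k'))) (mulP (dser k') (dser k'))
  end.

Definition poisson_solvable : Prop :=
  exists s, forall v, dser s v -> v = 0.

End PoissonNLie.

(* Main.v *)
Require Import Defs.
From HB Require Import structures.
From mathcomp Require Import all_boot all_order all_algebra.
From Stdlib Require Import Classical Lia.
From mathcomp Require Import zify.
Set Implicit Arguments. Unset Strict Implicit. Unset Printing Implicit Defensive.
Import GRing.Theory.
Local Open Scope ring_scope.

Section Gen.
Variables (F : fieldType) (V : vectType F).

Definition lc (C : V -> Prop) := C 0 /\ forall a u v, C u -> C v -> C (a *: u + v).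

Lemma lc_add C : lc C -> forall u v, C u -> C v -> C (u + v).
Proof. by case=> _ H u v Hu Hv; rewrite -[u]scale1r; apply: H. Qed.
Lemma lc_scale C : lc C -> forall a u, C u -> C (a *: u).
Proof. by case=> H0 H a u Hu; rewrite -[_ *: _]addr0; apply: H. Qed.
Lemma lc_opp C : lc C -> forall u, C u -> C (- u).
Proof. by move=> H u Hu; rewrite -scaleN1r; apply: lc_scale. Qed.
Lemma lc_0 C : lc C -> C 0.
Proof. by case. Qed.
Lemma lc_sum C (I : Type) (r : seq I) (P : pred I) (f : I -> V) :
  lc C -> (forall i, P i -> C (f i)) -> C (\sum_(i <- r | P i) f i).
Proof.
move=> HC Hf; apply: (big_ind C); first exact: lc_0.
  exact: lc_add. exact: Hf.
Qed.

Lemma lc_mem (U : {vspace V}) : lc (fun u => u \in U).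
Proof. split; first exact: mem0v. by move=> a u v Hu Hv; rewrite memvD // memvZ. Qed.

Lemma spanP_lc S : lc (spanP S).
Proof.
split; first by exists [::]; split=> //; rewrite span_nil memv0.
move=> a u v [s1 [H1 Hu]] [s2 [H2 Hv]]; exists (s1 ++ s2); split.
  by move=> x; rewrite mem_cat => /orP[/H1|/H2].
by rewrite span_cat memv_add // memvZ.
Qed.

Lemma spanP_min (C : V -> Prop) S : lc C -> (forall x, S x -> C x) ->
  forall v, spanP S v -> C v.
Proof.
move=> HC HS v [s [Hs Hv]]; elim: s v Hs Hv => [|x s IH] v Hs Hv.
  by move: Hv; rewrite span_nil memv0 => /eqP ->; apply: lc_0.
move: Hv; rewrite span_cons => /memv_addP [y /vlineP [k ->] [z Hz ->]].
case: HC => _ HC; apply: HC; first by apply: HS; apply: Hs; exact: mem_head.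
by apply: IH => // t Ht; apply: Hs; rewrite inE Ht orbT.
Qed.

Lemma spanP_sub (S : V -> Prop) x : S x -> spanP S x.
Proof.
move=> Hx; exists [:: x]; split; first by move=> y; rewrite inE => /eqP ->.
by apply: memv_span; exact: mem_head.
Qed.

Lemma sumP_lc A B : lc A -> lc B -> lc (sumP A B).
Proof.
move=> HA HB; split; first by exists 0, 0; rewrite addr0; split; [apply: lc_0|split; [apply: lc_0|]].
move=> a u v [a1 [b1 [Ha1 [Hb1 ->]]]] [a2 [b2 [Ha2 [Hb2 ->]]]].
exists (a *: a1 + a2), (a *: b1 + b2); split; first by case: HA => _; apply.
split; first by case: HB => _; apply.
by rewrite scalerDr addrACA.
Qed.

Lemma exists_max_dim (Pr : {vspace V} -> Prop) U0 : Pr U0 ->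
  exists N, Pr N /\ forall U, Pr U -> (\dim U <= \dim N)%N.
Proof.
move=> H0.
suff: forall k U, Pr U -> (\dim (fullv : {vspace V}) - \dim U <= k)%N ->
  exists N, Pr N /\ forall U, Pr U -> (\dim U <= \dim N)%N.
  by move=> /(_ _ U0 H0); apply => //.
elim=> [|k IH] U HU Hk.
  exists U; split=> // U' HU'; apply: leq_trans (dimvS (subvf U')) _.
  by rewrite -subn_eq0 -leqn0.
case: (classic (exists U', Pr U' /\ (\dim U < \dim U')%N)).
  case=> U' [HU' Hlt]; apply: (IH U') => //.
  have := dimvS (subvf U'); have := dimvS (subvf U); move: Hk Hlt.
  set a := \dim fullv; set b := \dim U; set c := \dim U'; lia.
move=> Hn; exists U; split=> // U' HU'; rewrite leqNgt; apply/negP => Hlt.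
by apply: Hn; exists U'.
Qed.

Lemma vspace_of_spanP (S : V -> Prop) :
  exists U : {vspace V}, forall v, v \in U <-> spanP S v.
Proof.
pose Pr := fun U : {vspace V} => exists s, (forall x, x \in s -> S x) /\ U = <<s>>%VS.
have H0 : Pr 0%VS by exists [::]; split=> //; rewrite span_nil.
have [N [[s [Hs ->]] HN]] := exists_max_dim H0.
exists <<s>>%VS => v; split; first by move=> Hv; exists s.
case=> s' [Hs' Hv].
have Hss : (<<s>> <= <<s ++ s'>>)%VS by rewrite span_cat addvSl.
have Hd : (\dim <<s ++ s'>> <= \dim <<s>>)%N.
  apply: HN; exists (s ++ s'); split=> // x; rewrite mem_cat => /orP[/Hs|/Hs'] //.
have /eqP Heq : <<s>>%VS == <<s ++ s'>>%VS by rewrite eqEdim Hss Hd.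
by rewrite Heq span_cat; apply: (subvP (addvSr _ _)).
Qed.

End Gen.

Section Main.
Variables (F : fieldType) (V : vectType F) (n' : nat).
Local Notation n := n'.+2.
Variables (mul : V -> V -> V) (br : {ffun 'I_n -> V} -> V).
Local Notation ff := {ffun 'I_n -> V}.
Hypothesis Hmul : comm_assoc_algebra mul.
Hypothesis Hml : multilinear br.
Hypothesis Hsk : skew_symmetric br.
Hypothesis Hfi : fundamental_identity br.
Hypothesis Hlb : leibniz_rule mul br.

Definition i0 : 'I_n := ord0.
Definition i1 : 'I_n := lift ord0 ord0.
Lemma i01 : i0 != i1. Proof. by []. Qed.
Lemma i10 : i1 != i0. Proof. by []. Qed.

Lemma fupdE (x : ff) i u j : fupd x i u j = if j == i then u else x j.
Proof. by rewrite ffunE. Qed.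
Lemma fupd_same (x : ff) i u : fupd x i u i = u.
Proof. by rewrite fupdE eqxx. Qed.
Lemma fupd_other (x : ff) i u j : j != i -> fupd x i u j = x j.
Proof. by rewrite fupdE => /negPf ->. Qed.
Lemma fupd_id (x : ff) i : fupd x i (x i) = x.
Proof. by apply/ffunP=> j; rewrite fupdE; case: eqP => // ->. Qed.
Lemma fupd_fupd (x : ff) i u v : fupd (fupd x i u) i v = fupd x i v.
Proof. by apply/ffunP=> j; rewrite !fupdE; case: eqP. Qed.
Lemma fswapE (x : ff) i j k : fswap x i j k = if k == i then x j else if k == j then x i else x k.
Proof. by rewrite ffunE. Qed.

Lemma double0 (b : V) : b = b + b -> b = 0.
Proof. by move=> H; apply: (@addrI _ b); rewrite addr0 -H. Qed.

Lemma br_add (x : ff) i u v : br (fupd x i (u + v)) = br (fupd x i u) + br (fupd x i v).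
Proof. by have := Hml x i 1 u v; rewrite !scale1r. Qed.
Lemma br0 (x : ff) i : br (fupd x i 0) = 0.
Proof. by have := br_add x i 0 0; rewrite addr0; apply: double0. Qed.
Lemma br_scale (x : ff) i a u : br (fupd x i (a *: u)) = a *: br (fupd x i u).
Proof. by have := Hml x i a u 0; rewrite !addr0 br0 addr0. Qed.

Lemma br_slot (C : V -> Prop) S (x : ff) i : lc C -> spanP S (x i) ->
  (forall y, S y -> C (br (fupd x i y))) -> C (br x).
Proof.
move=> HC Hx HS; rewrite -(fupd_id x i).
have HG : lc (fun y => C (br (fupd x i y))).
  split; first by rewrite br0; apply: lc_0.
  by move=> a u v Hu Hv; rewrite Hml; case: HC => _; apply.
exact: (spanP_min HG HS).
Qed.

Lemma fswap_id (x : ff) i : fswap x i i = x.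
Proof. by apply/ffunP=> k; rewrite fswapE; case: eqP => // ->. Qed.

Lemma br_swap (C : V -> Prop) (x : ff) i j : lc C -> C (br (fswap x i j)) -> C (br x).
Proof.
move=> HC; case: (eqVneq i j) => [->|Hij]; first by rewrite fswap_id.
by rewrite Hsk // => /(lc_opp HC); rewrite opprK.
Qed.

Definition LI (X : V -> Prop) := lc X /\ forall x : ff, X (x i0) -> X (br x).

Lemma LI_any X : LI X -> forall (x : ff) i, X (x i) -> X (br x).
Proof.
move=> [HX HI] x i Hi; apply: (br_swap (i := i0) (j := i) HX); apply: HI.
by rewrite fswapE eqxx.
Qed.

Lemma mulDl a u v w : mul (a *: u + v) w = a *: mul u w + mul v w.
Proof. by case: Hmul. Qed.
Lemma mulC u v : mul u v = mul v u.
Proof. by case: Hmul. Qed.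
Lemma mulA u v w : mul u (mul v w) = mul (mul u v) w.
Proof. by case: Hmul. Qed.
Lemma mulDr a u v w : mul w (a *: u + v) = a *: mul w u + mul w v.
Proof. by rewrite mulC mulDl !(mulC w). Qed.
Lemma mul0l w : mul 0 w = 0.
Proof.
by have := mulDl 1 0 0 w; rewrite !scale1r addr0; apply: double0.
Qed.
Lemma mul0r w : mul w 0 = 0.
Proof. by rewrite mulC mul0l. Qed.

Lemma mul_spanr (C : V -> Prop) T x y : lc C -> spanP T y ->
  (forall b, T b -> C (mul x b)) -> C (mul x y).
Proof.
move=> HC Hy HT.
have HG : lc (fun y => C (mul x y)).
  split; first by rewrite mul0r; apply: lc_0.
  by move=> a u v Hu Hv; rewrite mulDr; case: HC => _; apply.
exact: (spanP_min HG HT).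
Qed.

Lemma mul_span (C : V -> Prop) S T x y : lc C -> spanP S x -> spanP T y ->
  (forall a b, S a -> T b -> C (mul a b)) -> C (mul x y).
Proof.
move=> HC Hx Hy H.
have HG : lc (fun x => C (mul x y)).
  split; first by rewrite mul0l; apply: lc_0.
  by move=> a u v Hu Hv; rewrite mulDl; case: HC => _; apply.
apply: (spanP_min HG _ Hx) => a Ha; apply: (mul_spanr HC Hy) => b Hb; exact: H.
Qed.

Lemma args2_ok X Y (x : ff) : X (x i0) -> Y (x i1) -> forall i, args2 X Y i (x i).
Proof.
move=> HX HY i; rewrite /args2.
case: (eqVneq (val i) 0%N) => [H|H].
  by have -> : i = i0 by apply: val_inj.
case: (eqVneq (val i) 1%N) => [H1|H1] //.
by have -> : i = i1 by apply: val_inj.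
Qed.

Lemma args1_ok X (x : ff) : X (x i0) -> forall i, args1 X i (x i).
Proof.
move=> HX i; rewrite /args1.
case: (eqVneq (val i) 0%N) => [H|H] //.
by have -> : i = i0 by apply: val_inj.
Qed.

Lemma lpow_lc X k : lc X -> lc (lpow br X k).
Proof. by case: k => [|[|k]] //= _; apply: spanP_lc. Qed.

Lemma lpow_step X k (x : ff) : lpow br X k.+1 (x i0) -> X (x i1) -> lpow br X k.+2 (br x).
Proof. by move=> H0 H1; apply: spanP_sub; exists x; split=> //; apply: args2_ok. Qed.

Lemma lpow_elim X k (C : V -> Prop) : lc C ->
  (forall x : ff, lpow br X k.+1 (x i0) -> X (x i1) -> C (br x)) ->
  forall v, lpow br X k.+2 v -> C v.
Proof.
move=> HC H; apply: spanP_min => // v [x [Hx ->]].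
by apply: H; [apply: (Hx i0) | apply: (Hx i1)].
Qed.

Lemma flastE (x : ff) z k : flast x z k = if (val k < n'.+1)%N then x k else z.
Proof. by rewrite ffunE. Qed.

Lemma val_lt_max (k : 'I_n) : k != ord_max -> (val k < n'.+1)%N.
Proof.
move=> Hk; have := ltn_ord k; rewrite ltnS leq_eqVlt => /orP[/eqP H|] //.
by case/eqP: Hk; apply: val_inj.
Qed.

Lemma swap_flast (x : ff) z :
  fswap (fupd x i0 z) i0 ord_max = flast (fswap x i0 ord_max) z.
Proof.
apply/ffunP=> k; rewrite fswapE flastE !fupdE fswapE.
case: (eqVneq k i0) => [->|H0] /=; first by [].
case: (eqVneq k ord_max) => [->|Hm] /=; first by rewrite ?eqxx ?ltnn.
by rewrite val_lt_max.
Qed.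

Lemma flast_max (x : ff) z : flast x z ord_max = z.
Proof. by rewrite flastE ltnn. Qed.

Lemma lpow_LI X : LI X -> forall k, LI (lpow br X k.+1).
Proof.
move=> HX; elim=> [|k IH] //.
split; first by apply: lpow_lc; case: HX.
move=> x Hx; apply: (br_slot (spanP_lc _) Hx) => _ [y [Hy ->]].
apply: (br_swap (i := i0) (j := ord_max)); first exact: spanP_lc.
rewrite swap_flast Hfi; apply: lc_sum; first exact: spanP_lc.
move=> i _; apply: lpow_step.
  rewrite fupdE; case: eqP => [<-|_]; last exact: (Hy i0).
  by apply: (LI_any IH (i := ord_max)); rewrite flast_max; apply: (Hy i0).
rewrite fupdE; case: eqP => [<-|_]; last exact: (Hy i1).
by apply: (LI_any HX (i := ord_max)); rewrite flast_max; apply: (Hy i1).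
Qed.

Lemma lpow_dec X : LI X -> forall k v, lpow br X k.+2 v -> lpow br X k.+1 v.
Proof.
move=> HX k; apply: lpow_elim; first by case: (lpow_LI HX k).
by move=> x Hx _; case: (lpow_LI HX k) => _; apply.
Qed.

Lemma lpow_mono X : LI X -> forall k m v, (k <= m)%N -> lpow br X m.+1 v -> lpow br X k.+1 v.
Proof.
move=> HX k m v; elim: m => [|m IH]; first by rewrite leqn0 => /eqP ->.
rewrite leq_eqVlt => /orP[/eqP -> //|]; rewrite ltnS => Hkm Hv.
by apply: IH => //; apply: lpow_dec.
Qed.

Lemma lpow_nil X s : LI X -> (forall v, lpow br X s v -> v = 0) ->
  forall m v, (s <= m)%N -> lpow br X m.+1 v -> v = 0.
Proof.
move=> HX Hs m v Hm Hv; case: s Hs Hm => [|s] Hs Hm.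
  by apply: Hs; exact: (lpow_mono HX (k := 0) (m := m) (leq0n _) Hv).
by apply: Hs; exact: (lpow_mono HX (k := s) (m := m) (ltnW Hm) Hv).
Qed.

Lemma lpow_sub1 X : LI X -> forall k v, lpow br X k v -> X v.
Proof. by move=> HX [|k] v // Hv; exact: (lpow_mono HX (k := 0) (m := k) (leq0n _) Hv). Qed.

Lemma lc_zero : lc (fun v : V => v = 0).
Proof. by split=> // a u v -> ->; rewrite scaler0 addr0. Qed.

Lemma LI_of_ideal (I : {vspace V}) : lie_ideal br I -> LI (fun u => u \in I).
Proof.
move=> H; split; first exact: lc_mem.
by move=> x Hx; apply: H; apply: spanP_sub; exists x; split=> //; apply: args1_ok.
Qed.

Lemma ideal_of_LI (I : {vspace V}) : LI (fun u => u \in I) -> lie_ideal br I.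
Proof.
move=> [_ H] v; apply: (spanP_min (lc_mem I)).
by move=> _ [x [Hx ->]]; apply: H; apply: (Hx i0).
Qed.

Definition pw (X : V -> Prop) p := fun v => if p is 0 then True else lpow br X p v.

Lemma pw_step X : LI X -> forall p (w : ff), pw X p (w i0) -> X (w i1) -> pw X p.+1 (br w).
Proof.
move=> HX [|p] w H0 H1 /=; first by apply: (LI_any HX (i := i1)).
exact: lpow_step.
Qed.

Lemma pw_stay X : LI X -> forall p (w : ff), pw X p (w i0) -> pw X p (br w).
Proof. by move=> HX [|p] w H0 //=; case: (lpow_LI HX p) => _; apply. Qed.

Lemma f2_0 (x : ff) y a : fupd (fupd x i0 y) i1 a i0 = y.
Proof. by rewrite fupd_other // fupd_same. Qed.
Lemma f2_1 (x : ff) y a : fupd (fupd x i0 y) i1 a i1 = a.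
Proof. by rewrite fupd_same. Qed.

Lemma br_split (C : V -> Prop) (x : ff) i a b : lc C -> x i = a + b ->
  C (br (fupd x i a)) -> C (br (fupd x i b)) -> C (br x).
Proof. by move=> HC Hx Ha Hb; rewrite -(fupd_id x i) Hx br_add; apply: lc_add. Qed.

Lemma sum_nil (I K : {vspace V}) : lie_nilpotent_ideal br I -> lie_nilpotent_ideal br K ->
  lie_nilpotent_ideal br (I + K)%VS.
Proof.
move=> [/LI_of_ideal HI [sI HsI]] [/LI_of_ideal HK [sK HsK]].
have HIK : LI (fun u => u \in (I + K)%VS).
  split; first exact: lc_mem.
  move=> x /memv_addP [a Ha [b Hb Hab]].
  apply: (br_split (lc_mem _) Hab).
    apply: (subvP (addvSl I K)); case: HI => _; apply; by rewrite fupd_same.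
  apply: (subvP (addvSr I K)); case: HK => _; apply; by rewrite fupd_same.
split; first exact: ideal_of_LI.
pose X := fun u => u \in I; pose Y := fun u => u \in K.
pose S m := spanP (fun v => exists p q, (p + q = m)%N /\ pw X p v /\ pw Y q v).
have Hm : forall m v, lpow br (fun u => u \in (I + K)%VS) m.+1 v -> S m.+1 v.
  elim=> [|m IH] v.
    move=> /memv_addP [a Ha [b Hb ->]]; apply: lc_add; first exact: spanP_lc.
      by apply: spanP_sub; exists 1%N, 0%N.
    by apply: spanP_sub; exists 0%N, 1%N.
  apply: lpow_elim; first exact: spanP_lc.
  move=> x /IH Hx /memv_addP [a Ha [b Hb Hab]].
  apply: (br_slot (spanP_lc _) Hx) => y [p [q [Hpq [Hp Hq]]]].
  apply: (br_split (i := i1) (spanP_lc _)); first by rewrite fupd_other // Hab.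
    apply: spanP_sub; exists p.+1, q; split; first by rewrite addSn Hpq.
    split; first by apply: pw_step => //; rewrite ?f2_0 ?f2_1.
    by apply: pw_stay => //; rewrite ?f2_0 ?f2_1.
  apply: spanP_sub; exists p, q.+1; split; first by rewrite addnS Hpq.
  split; first by apply: pw_stay => //; rewrite ?f2_0 ?f2_1.
  by apply: pw_step => //; rewrite ?f2_0 ?f2_1.
exists (sI + sK).+1 => v /Hm; apply: (spanP_min lc_zero).
move=> u [p [q [Hpq [Hp Hq]]]].
case: (leqP sI.+1 p) => Hp'.
  case: p Hp Hp' {Hpq} => [|p] // Hp Hp'.
  exact: (lpow_nil HI HsI Hp' Hp).
have Hq' : (sK.+1 <= q)%N by lia.
case: q Hq Hq' {Hpq} => [|q] // Hq Hq'.
exact: (lpow_nil HK HsK Hq' Hq).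
Qed.

Lemma nilrad_exists : exists N, is_nilradical_L br N.
Proof.
have H0 : lie_nilpotent_ideal br 0%VS.
  split.
    apply: ideal_of_LI; split; first exact: lc_mem.
    move=> x; rewrite memv0 => /eqP Hx; rewrite -(fupd_id x i0) Hx br0; exact: mem0v.
  by exists 1%N => v /=; rewrite memv0 => /eqP.
have [N [HN Hmax]] := exists_max_dim H0.
exists N; split=> // I HI.
have HNI := sum_nil HN HI.
have /eqP Heq : N == (N + I)%VS by rewrite eqEdim addvSl Hmax.
by rewrite Heq addvSr.
Qed.

Inductive Tr : nat -> V -> Prop :=
  | Tr1 p : Tr 1 p
  | TrM l1 l2 x y : Tr l1 x -> Tr l2 y -> Tr (l1 + l2) (mul x y).

Definition Q j := spanP (fun v => exists l, (j <= l)%N /\ Tr l v).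

Lemma mul_spanl (C : V -> Prop) S x y : lc C -> spanP S x ->
  (forall a, S a -> C (mul a y)) -> C (mul x y).
Proof.
move=> HC Hx H; rewrite mulC; apply: (mul_spanr HC Hx) => a Ha; rewrite mulC; exact: H.
Qed.

Lemma Q_mul a b x y : Q a x -> Q b y -> Q (a + b) (mul x y).
Proof.
move=> Hx Hy; apply: (mul_span (spanP_lc _) Hx Hy) => u w [l1 [H1 T1]] [l2 [H2 T2]].
by apply: spanP_sub; exists (l1 + l2)%N; split; [apply: leq_add | apply: TrM].
Qed.

Lemma Q_of_Tr l v : Tr l v -> Q l v.
Proof. by move=> H; apply: spanP_sub; exists l. Qed.

Lemma Tr_split l v : Tr l v -> forall a b, (1 <= a)%N -> (1 <= b)%N -> (a + b <= l)%N ->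
  mulP mul (Q a) (Q b) v.
Proof.
elim=> [p|l1 l2 x y Hx IHx Hy IHy] a b Ha Hb Hab; first by lia.
case: (leqP a l1) => Hal.
  case: (leqP b l2) => Hbl.
    apply: spanP_sub; exists x, y; split; last split=> //.
      by apply: spanP_sub; exists l1.
    by apply: spanP_sub; exists l2.
  have := IHx a (b - l2)%N Ha ltac:(lia) ltac:(lia).
  move=> Hx'; apply: (mul_spanl (spanP_lc _) Hx') => _ [u [w [Hu [Hw ->]]]].
  rewrite -mulA; apply: spanP_sub; exists u, (mul w y); split; first by []. split; last by [].
  have -> : b = ((b - l2) + l2)%N by lia.
  by apply: Q_mul => //; apply: Q_of_Tr.
have := IHy (a - l1)%N b ltac:(lia) Hb ltac:(lia).
move=> Hy'; apply: (mul_spanr (spanP_lc _) Hy') => _ [u [w [Hu [Hw ->]]]].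
rewrite mulA; apply: spanP_sub; exists (mul x u), w; split; last by split.
have -> : a = (l1 + (a - l1))%N by lia.
by apply: Q_mul => //; apply: Q_of_Tr.
Qed.

Lemma Q_dser k v : Q (2 ^ k) v -> dser mul br k.+1 v.
Proof.
elim: k v => [|k IH] v Hv; first by [].
have HC : lc (dser mul br k.+2) by apply: sumP_lc; apply: spanP_lc.
apply: (spanP_min HC _ Hv) => u [l [Hl Hu]].
have Hm := Tr_split Hu (a := 2 ^ k) (b := 2 ^ k) (expn_gt0 _ _) (expn_gt0 _ _)
  ltac:(rewrite addnn -mul2n -expnS; exact Hl).
exists 0, u; split; first exact: (lc_0 (spanP_lc _)).
split; last by rewrite add0r.
apply: (spanP_min (spanP_lc _) _ Hm) => _ [p [q [Hp [Hq ->]]]].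
by apply: spanP_sub; exists p, q; split; [apply: IH | split; [apply: IH|]].
Qed.

Lemma Tr_zero s : (forall v, dser mul br s v -> v = 0) ->
  forall l v, Tr l v -> (2 ^ s.-1 <= l)%N -> v = 0.
Proof.
move=> Hs l v Hv Hl.
have HQ : Q (2 ^ s.-1) v by apply: spanP_sub; exists l.
have := Q_dser HQ; case: s Hs {Hl HQ} => [|s] Hs /= H; exact: Hs.
Qed.

Section Mono.
Variable X : V -> Prop.
Hypothesis HX : LI X.

Inductive Mo : nat -> nat -> V -> Prop :=
  | MoP p : Mo 0 1 p
  | MoN b v : (1 <= b)%N -> lpow br X b v -> Mo b 1 v
  | MoM w1 l1 x w2 l2 y : Mo w1 l1 x -> Mo w2 l2 y -> Mo (w1 + w2) (l1 + l2) (mul x y).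

Definition Wt w := spanP (fun v => exists w' l, (w <= w')%N /\ Mo w' l v).

Lemma Wt_lc w : lc (Wt w). Proof. exact: spanP_lc. Qed.

Lemma Wt_of_Mo w l v : Mo w l v -> Wt w v.
Proof. by move=> H; apply: spanP_sub; exists w, l. Qed.

Lemma Wt_anti w1 w2 v : (w1 <= w2)%N -> Wt w2 v -> Wt w1 v.
Proof.
move=> H; apply: (spanP_min (Wt_lc _)) => u [w' [l [Hw Hu]]].
by apply: spanP_sub; exists w', l; split=> //; apply: leq_trans Hw.
Qed.

Lemma Wt_mul a b x y : Wt a x -> Wt b y -> Wt (a + b) (mul x y).
Proof.
move=> Hx Hy; apply: (mul_span (Wt_lc _) Hx Hy) => u w [w1 [l1 [H1 M1]]] [w2 [l2 [H2 M2]]].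
by apply: spanP_sub; exists (w1 + w2)%N, (l1 + l2)%N; split; [apply: leq_add|apply: MoM].
Qed.

Lemma Mo_Tr w l v : Mo w l v -> Tr l v.
Proof. by elim=> *; [apply: Tr1|apply: Tr1|apply: TrM]. Qed.

Lemma Mo_bound sN : (forall v, lpow br X sN v -> v = 0) ->
  forall w l v, Mo w l v -> v = 0 \/ (w <= sN * l)%N.
Proof.
move=> HsN w l v; elim=> [p|b u Hb Hu|w1 l1 x w2 l2 y _ IH1 _ IH2].
- by right.
- case: b Hb Hu => [|b] // _ Hu; case: (leqP sN b) => Hsb.
    by left; exact: (lpow_nil HX HsN Hsb Hu).
  by right; rewrite muln1.
- case: IH1 => [->|H1]; first by left; rewrite mul0l.
  case: IH2 => [->|H2]; first by left; rewrite mul0r.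
  by right; rewrite mulnDr leq_add.
Qed.

Lemma Wt_ideal0 w l u : Mo w l u -> forall x : ff, x i0 = u -> Wt w (br x).
Proof.
elim=> [p|b v Hb Hv|w1 l1 a w2 l2 c Ha IHa Hc IHc] x Hx.
- by apply: spanP_sub; exists 0%N, 1%N; split=> //; apply: MoP.
- apply: Wt_of_Mo; apply: (MoN Hb).
  case: b Hb Hv => [|b] // _ Hv; case: (lpow_LI HX b) => _; apply; by rewrite Hx.
- rewrite -(fupd_id x i0) Hx Hlb //; apply: lc_add; first exact: Wt_lc.
    by apply: Wt_mul; [apply: (Wt_of_Mo Ha)|apply: IHc; rewrite fupd_same].
  by rewrite addnC; apply: Wt_mul; [apply: (Wt_of_Mo Hc)|apply: IHa; rewrite fupd_same].
Qed.

Lemma Wt_ideal w (x : ff) i : Wt w (x i) -> Wt w (br x).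
Proof.
move=> H; apply: (br_swap (i := i0) (j := i) (Wt_lc _)).
apply: (br_slot (Wt_lc _) (i := i0) (S := fun v => exists w' l, (w <= w')%N /\ Mo w' l v)).
  by rewrite fswapE eqxx.
move=> u [w' [l [Hw Hu]]]; apply: (Wt_anti Hw); apply: (Wt_ideal0 Hu).
by rewrite fupd_same.
Qed.

Lemma KB_N u : X u -> forall w l v, Mo w l v -> forall x : ff, x i0 = v -> x i1 = u ->
  Wt w.+1 (br x).
Proof.
move=> Hu w l v; elim=> [p|b v' Hb Hv|w1 l1 a w2 l2 c Ha IHa Hc IHc] x H0 H1.
- apply: (Wt_of_Mo (l := 1%N)); apply: MoN => //=.
  by apply: (LI_any HX (i := i1)); rewrite H1.
- apply: (Wt_of_Mo (l := 1%N)); apply: MoN => //.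
  case: b Hb Hv => [|b] // _ Hv; apply: lpow_step; by rewrite ?H0 ?H1.
- rewrite -(fupd_id x i0) H0 Hlb //; apply: lc_add; first exact: Wt_lc.
    rewrite -addnS; apply: Wt_mul; first exact: (Wt_of_Mo Ha).
    by apply: IHc; rewrite ?fupd_same ?fupd_other.
  rewrite -addSn addnC; apply: Wt_mul; first exact: (Wt_of_Mo Hc).
  by apply: IHa; rewrite ?fupd_same ?fupd_other.
Qed.

Lemma KB_help wa la a wc lc' c w l v : Mo wa la a -> Mo wc lc' c -> (1 <= wa + wc)%N ->
  ((1 <= wc)%N -> forall x : ff, x i0 = v -> x i1 = c -> Wt w.+1 (br x)) ->
  Mo w l v -> forall y : ff, y i1 = v -> Wt w.+1 (mul a (br (fupd y i0 c))).
Proof.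
move=> Ha Hc Hw IH Hv y Hy.
case: (leqP 1 wc) => Hwc.
  have H : Wt w.+1 (br (fupd y i0 c)).
    apply: (br_swap (i := i0) (j := i1) (Wt_lc _)); apply: IH => //.
      by rewrite fswapE eqxx fupd_other.
    by rewrite fswapE eqxx /= fupd_same.
  by apply: (Wt_anti (w2 := (wa + w.+1)%N)); [apply: leq_addl|apply: Wt_mul => //; exact: (Wt_of_Mo Ha)].
have H : Wt w (br (fupd y i0 c)).
  by apply: (Wt_ideal (i := i1)); rewrite fupd_other // Hy; apply: (Wt_of_Mo Hv).
apply: (Wt_anti (w2 := (wa + w)%N)); first by lia.
by apply: Wt_mul => //; exact: (Wt_of_Mo Ha).
Qed.

Lemma KB w' l' u : Mo w' l' u -> (1 <= w')%N -> forall w l v, Mo w l v ->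
  forall x : ff, x i0 = v -> x i1 = u -> Wt w.+1 (br x).
Proof.
elim=> [p|b u' Hb Hu|wa la a wc lc' c Ha IHa Hc IHc] // Hw w l v Hv x H0 H1.
- exact: (KB_N (lpow_sub1 HX Hu) Hv H0 H1).
- apply: (br_swap (i := i0) (j := i1) (Wt_lc _)).
  set y := fswap x i0 i1.
  have Hy0 : y i0 = mul a c by rewrite /y fswapE eqxx.
  have Hy1 : y i1 = v by rewrite /y fswapE eqxx /=.
  rewrite -(fupd_id y i0) Hy0 Hlb //; apply: lc_add; first exact: Wt_lc.
    apply: (KB_help Ha Hc Hw _ Hv Hy1) => Hwc x' H0' H1'.
    exact: (IHc Hwc w l v Hv x' H0' H1').
  apply: (KB_help Hc Ha _ _ Hv Hy1); first by rewrite addnC.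
  move=> Hwa x' H0' H1'; exact: (IHa Hwa w l v Hv x' H0' H1').
Qed.

Lemma Wt_br k (x : ff) : Wt k (x i0) -> Wt 1 (x i1) -> Wt k.+1 (br x).
Proof.
move=> H0 H1; apply: (br_slot (Wt_lc _) H0) => v [w [l [Hkw Hv]]].
apply: (br_slot (Wt_lc _) (i := i1) (S := fun v => exists w2 l2, (1 <= w2)%N /\ Mo w2 l2 v)); first by rewrite fupd_other //; exact: H1.
move=> u [w' [l' [Hw' Hu]]].
apply: (Wt_anti (w2 := w.+1)) => //.
exact: (KB Hu Hw' Hv (f2_0 _ _ _) (f2_1 _ _ _)).
Qed.

Lemma Wt_zero sN s : (forall v, lpow br X sN v -> v = 0) ->
  (forall v, dser mul br s v -> v = 0) ->
  forall w v, (sN.+1 * 2 ^ s.-1 <= w)%N -> Wt w v -> v = 0.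
Proof.
move=> HsN Hs w v Hw; apply: (spanP_min lc_zero) => u [w' [l [Hww Hu]]].
case: (Mo_bound HsN Hu) => // Hb.
case: (leqP (2 ^ s.-1) l) => Hl; first exact: (Tr_zero Hs (Mo_Tr Hu) Hl).
have : (sN * l < sN.+1 * 2 ^ s.-1)%N.
  apply: (leq_ltn_trans (leq_mul (leqnSn sN) (leqnn l))).
  by rewrite ltn_pmul2l.
lia.
Qed.

End Mono.

Lemma lpow_ppow (X : V -> Prop) k v : lpow br X k v -> ppow mul br X k v.
Proof.
elim: k v => [|[|k] IH] v //; apply: lpow_elim.
  apply: sumP_lc; exact: spanP_lc.
move=> x Hx0 Hx1; exists (br x), 0; split.
  by apply: spanP_sub; exists x; split=> //; apply: args2_ok => //; apply: IH.
by split; [exact: (lc_0 (spanP_lc _)) | rewrite addr0].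
Qed.

Lemma main_res : poisson_solvable mul br ->
  exists N, is_Nil mul br N /\ is_nilradical_L br N.
Proof.
move=> [s Hs].
have [N [[HNi [sN HsN]] Hmax]] := nilrad_exists.
have HX := LI_of_ideal HNi.
pose X := fun u => u \in N.
pose B := (sN.+1 * 2 ^ s.-1)%N.
have HB : forall w v, (B <= w)%N -> Wt X w v -> v = 0.
  by move=> w v; apply: (Wt_zero HX HsN Hs).
have [U HU] := vspace_of_spanP (fun v => exists w' l, (1 <= w')%N /\ Mo X w' l v).
have HXW : forall u, u \in N -> Wt X 1 u.
  move=> u Hu; apply: (Wt_of_Mo (l := 1%N)); exact: MoN.
have HUN : (U <= N)%VS.
  apply: Hmax; split.
    apply: ideal_of_LI; split; first exact: lc_mem.
    move=> x /HU Hx; apply/HU; exact: (Wt_ideal HX (i := i0)).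
  have HLU : forall k v, lpow br (fun u => u \in U) k.+1 v -> Wt X k.+1 v.
    elim=> [|k IH] v; first by move/HU.
    apply: lpow_elim; first exact: Wt_lc.
    by move=> x /IH H0 /HU H1; apply: (Wt_br HX).
  exists B.+1 => v /HLU; apply: HB; exact: leqnSn.
have HPN : forall v, mulP mul (@fullP _ V) (fun u => u \in N) v -> v \in N.
  apply: spanP_min; first exact: lc_mem.
  move=> _ [a [b [_ [Hb ->]]]]; apply: (subvP HUN); apply/HU.
  apply: spanP_sub; exists 1%N, 2%N; split=> //.
  have -> : 1%N = (0 + 1)%N by [].
  have -> : 2%N = (1 + 1)%N by [].
  by apply: MoM; [apply: MoP | apply: MoN].
have HPP : forall k v, ppow mul br (fun u => u \in N) k.+1 v -> Wt X k.+1 v.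
  elim=> [|k IH] v; first exact: HXW.
  move=> [a [b [Ha [Hb ->]]]]; apply: lc_add; first exact: Wt_lc.
    apply: (spanP_min (Wt_lc _ _)) Ha => _ [x [Hx ->]].
    by apply: (Wt_br HX); [exact: (IH _ (Hx i0)) | apply: HXW; apply: (Hx i1)].
  apply: (spanP_min (Wt_lc _ _)) Hb => _ [p [q [Hp [Hq ->]]]].
  by rewrite -addn1; apply: Wt_mul; [exact: (IH _ Hp) | apply: HXW].
exists N; split; last by split=> //; split=> //; exists sN.
split.
  split; first by split=> //; exact: HNi.
  exists B.+1 => v /HPP; apply: HB; exact: leqnSn.
move=> I [[_ HIi] [sI HsI]]; apply: Hmax; split=> //.
by exists sI => v /lpow_ppow; apply: HsI.
Qed.

End Main.

Theorem corollary5p11 (F : closedFieldType) (V : vectType F) (n : nat)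
    (mul : V -> V -> V) (br : {ffun 'I_n -> V} -> V) :
  [pchar F] =i pred0 ->
  poisson_nLie mul br ->
  poisson_solvable mul br ->
  exists N : {vspace V}, is_Nil mul br N /\ is_nilradical_L br N.
Proof.
move=> _ [Hn [Hm [Hml [Hsk [Hfi Hlb]]]]] Hs.
case: n br Hn Hml Hsk Hfi Hlb Hs => [|[|n']] br Hn // Hml Hsk Hfi Hlb Hs.
exact: main_res.
Qed.
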